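(* Let $K\subset(-1,0)$ be compact and fix an integer $s$. For natural numbers $N\ge 2$ and $1\le a\le N-1$, let $b_{N,a}\colon K\to\mathbb{R}$ be real-valued functions, and suppose \[ \sup\{\,|b_{N,a}(q)| : N\ge 2,\ 1\le a\le N-1,\ q\in K\,\}<\infty. \] Then \[ \sup_{q\in K}\left|\sum_{a=1}^{N-1}\binom{N}{a}\, b_{N,a}(q)\, q^{a(N-a)+s}\right|\longrightarrow 0\qquad\text{as } N\to\infty. \] *)

(* Defs.v *)
From Stdlib Require Export Reals ZArith.
Open Scope R_scope.

Definition lemma_sum (b : nat -> nat -> R -> R) (s : Z) (N : nat) (q : R) : R :=
  sum_f 1 (N - 1)
    (fun a => Binomial.C N a * b N a q
              * powerRZ q (Z.of_nat (a * (N - a)) + s)%Z).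

(* Main.v *)
Require Import Defs.
From Stdlib Require Import Reals ZArith Lra Lia List.
Open Scope R_scope.

Lemma C_n0 n : Binomial.C n 0 = 1.
Proof. unfold Binomial.C. rewrite Nat.sub_0_r. simpl.
  assert (H := INR_fact_neq_0 n). field. auto. Qed.

Lemma C_nn n : Binomial.C n n = 1.
Proof. unfold Binomial.C. rewrite Nat.sub_diag. simpl.
  assert (H := INR_fact_neq_0 n). field. auto. Qed.

Lemma C_nonneg n a : 0 <= Binomial.C n a.
Proof. unfold Binomial.C. apply Rlt_le, Rdiv_lt_0_compat.
  apply INR_fact_lt_0. apply Rmult_lt_0_compat; apply INR_fact_lt_0. Qed.

Lemma C_le_pow : forall N a, (a <= N)%nat -> Binomial.C N a <= INR N ^ a.
Proof.
  induction N as [|N IH]; intros a Ha.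
  - assert (a = 0%nat) by lia. subst. rewrite C_n0. simpl. lra.
  - destruct a as [|a].
    + rewrite C_n0; simpl; lra.
    + destruct (Nat.eq_dec a N) as [->|Hne].
      * rewrite C_nn. apply pow_R1_Rle. rewrite S_INR. pose proof (pos_INR N). lra.
      * rewrite <- pascal by lia.
        assert (H1 := IH a ltac:(lia)). assert (H2 := IH (S a) ltac:(lia)).
        assert (H3 : INR N ^ a <= INR (S N) ^ a).
        { apply pow_incr. rewrite S_INR. pose proof (pos_INR N). lra. }
        rewrite S_INR in *. simpl in *. pose proof (pos_INR N).
        assert (0 <= INR N ^ a) by (apply pow_le; lra).
        nra.
Qed.

Lemma pow_decr (r : R) (m n : nat) : 0 <= r <= 1 -> (m <= n)%nat -> r ^ n <= r ^ m.
Proof.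
  intros Hr Hmn. replace n with (m + (n - m))%nat by lia. rewrite pow_add.
  assert (0 <= r ^ m) by (apply pow_le; lra).
  assert (r ^ (n - m) <= 1).
  { rewrite <- (pow1 (n - m)). apply pow_incr. lra. }
  assert (0 <= r ^ (n - m)) by (apply pow_le; lra). nra.
Qed.

Lemma pow_ge1_le (x : R) (k : nat) : 0 <= x <= 1 -> (1 <= k)%nat -> x ^ k <= x.
Proof. intros. pattern x at 2; rewrite <- pow_1. apply pow_decr; auto. Qed.

Lemma term_bound (N a k : nat) (y rho : R) :
  0 <= y -> y <= rho ^ 2 -> 0 <= rho <= 1 -> (1 <= k)%nat ->
  Binomial.C N a <= INR N ^ k -> (k * N <= 2 * (a * (N - a)))%nat ->
  INR N * rho ^ N <= 1 ->
  Binomial.C N a * y ^ (a * (N - a)) <= INR N * rho ^ N.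
Proof.
  intros Hy Hyr Hr Hk HC Hkn Hx.
  assert (E1 : y ^ (a * (N - a)) <= rho ^ (k * N)).
  { apply Rle_trans with ((rho ^ 2) ^ (a * (N - a))).
    - apply pow_incr; lra.
    - rewrite <- pow_mult. apply pow_decr; auto. }
  assert (E2 : rho ^ (k * N) = (rho ^ N) ^ k) by (rewrite Nat.mul_comm; apply pow_mult).
  assert (0 <= rho ^ N) by (apply pow_le; lra).
  assert (0 <= INR N * rho ^ N) by (apply Rmult_le_pos; [apply pos_INR|lra]).
  apply Rle_trans with (INR N ^ k * (rho ^ N) ^ k).
  - apply Rmult_le_compat; auto using C_nonneg. apply pow_le; lra. lra.
  - rewrite <- Rpow_mult_distr. apply pow_ge1_le; auto.
Qed.

Lemma Nsig (sig : R) (N : nat) : 0 <= sig < 1 ->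
  INR N * sig ^ N * (1 - sig) + sig ^ (S N) <= sig.
Proof.
  intros Hs. induction N as [|N IH].
  - simpl. lra.
  - rewrite S_INR. simpl in *. set (p := sig ^ N) in *.
    assert (0 <= p) by (apply pow_le; lra).
    pose proof (pos_INR N).
    assert (0 <= INR N * p * ((1 - sig) * (1 - sig))) by
      (apply Rmult_le_pos; [apply Rmult_le_pos|nra]; lra).
    nra.
Qed.

Lemma list_min (l : list R) : (forall t, In t l -> 0 < t) ->
  exists m, 0 < m /\ forall t, In t l -> m <= t.
Proof.
  induction l as [|x l IH]; intros H.
  - exists 1. split. lra. intros t [].
  - destruct IH as [m [Hm Hm2]]. intros; apply H; right; auto.
    exists (Rmin m x). split. apply Rmin_pos; auto. apply H; left; auto.
    intros t [<-|Ht]. apply Rmin_r. apply Rle_trans with m; auto. apply Rmin_l.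
Qed.

Lemma compact_sep (K : R -> Prop) : compact K -> (forall q, K q -> -1 < q < 0) ->
  exists m, 0 < m /\ forall q, K q -> m < Rabs q < 1 - m.
Proof.
  intros HK Hs.
  set (ff := fun t x => (0 < t < 1/2) /\ t < Rabs x < 1 - t).
  assert (cf : forall t, (exists y, ff t y) -> (fun t => 0 < t < 1/2) t).
  { intros t [y [H _]]. exact H. }
  set (fam := mkfamily (fun t => 0 < t < 1/2) ff cf).
  assert (Hcov : covering_open_set K fam).
  { split.
    - intros x Hx. specialize (Hs x Hx).
      exists (Rmin (Rabs x) (1 - Rabs x) / 2). simpl. unfold ff.
      rewrite Rabs_left by lra.
      unfold Rmin; destruct (Rle_dec _ _); lra.
    - intros t x Hx. simpl in Hx. unfold ff in Hx. destruct Hx as [Ht Hx].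
      assert (Hp : 0 < Rmin (Rabs x - t) (1 - t - Rabs x))
        by (apply Rmin_pos; lra).
      exists (mkposreal _ Hp). intros y Hy. unfold disc in Hy. simpl in Hy.
      simpl. unfold ff. split; auto.
      pose proof (Rmin_l (Rabs x - t) (1 - t - Rabs x)).
      pose proof (Rmin_r (Rabs x - t) (1 - t - Rabs x)).
      pose proof (Rabs_triang_inv y x). pose proof (Rabs_triang_inv x y).
      rewrite Rabs_minus_sym in H2. lra. }
  destruct (HK fam Hcov) as [D [Hc [l Hl]]].
  destruct (list_min l) as [m [Hm Hm2]].
  { intros t Ht. apply Hl in Ht. destruct Ht as [Ht _]. simpl in Ht. lra. }
  exists m. split; auto. intros q Hq.
  destruct (Hc q Hq) as [t [Hft HDt]]. simpl in Hft. unfold ff in Hft.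
  assert (In t l). { apply Hl. split; simpl; tauto. }
  specialize (Hm2 t H). lra.
Qed.

Lemma bernoulli_m (t : R) (n : nat) : 0 <= t <= 1 -> 1 - INR n * t <= (1 - t) ^ n.
Proof.
  intros Ht. induction n as [|n IH].
  - simpl. lra.
  - rewrite S_INR. simpl. pose proof (pos_INR n).
    assert (0 <= INR n * t * t) by (apply Rmult_le_pos; [apply Rmult_le_pos|]; lra).
    nra.
Qed.

Lemma powerRZ_bound (q m0 : R) (s : Z) : 0 < m0 <= 1 -> m0 < Rabs q <= 1 ->
  Rabs (powerRZ q s) <= (/ m0) ^ (Z.abs_nat s).
Proof.
  intros Hm Hq.
  assert (Hi : 1 <= / m0).
  { rewrite <- Rinv_1. apply Rinv_le_contravar; lra. }
  destruct s as [|p|p]; simpl.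
  - rewrite Rabs_R1. lra.
  - rewrite <- RPow_abs. apply Rle_trans with 1.
    + rewrite <- (pow1 (Pos.to_nat p)). apply pow_incr. split; [apply Rabs_pos|lra].
    + apply pow_R1_Rle. lra.
  - rewrite Rabs_inv, <- RPow_abs, pow_inv. apply Rinv_le_contravar.
    + apply pow_lt. lra.
    + apply pow_incr. lra.
Qed.

Theorem lemma2p3
  (K : R -> Prop) (s : Z) (b : nat -> nat -> R -> R)
  (HK : compact K)
  (HKsub : forall q, K q -> -1 < q < 0)
  (Hbd : exists M : R, forall (N a : nat) (q : R),
           (2 <= N)%nat -> (1 <= a <= N - 1)%nat -> K q ->
           Rabs (b N a q) <= M) :
  forall eps : R, 0 < eps ->
    exists N0 : nat, forall N : nat, (N0 <= N)%nat ->
      forall q : R, K q -> Rabs (lemma_sum b s N q) <= eps.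
Proof.
  intros eps Heps.
  destruct Hbd as [M HM].
  destruct (compact_sep K HK HKsub) as [m [Hm Hmq]].
  set (m0 := Rmin m (1/2)).
  assert (Hm0 : 0 < m0 <= 1/2).
  { unfold m0; split. apply Rmin_pos; lra. apply Rmin_r. }
  assert (Hm0q : forall q, K q -> m0 < Rabs q <= 1 - m0).
  { intros q Hq. specialize (Hmq q Hq). pose proof (Rmin_l m (1/2)).
    fold m0 in H. lra. }
  set (sig := 1 - m0 / 6).
  assert (Hsig : 0 <= sig < 1) by (unfold sig; lra).
  set (rho := sig ^ 3).
  assert (Hrho : 0 <= rho <= 1).
  { unfold rho. split. apply pow_le; lra. rewrite <- (pow1 3). apply pow_incr; lra. }
  assert (Hrho2 : 1 - m0 <= rho ^ 2).
  { unfold rho. rewrite <- pow_mult. simpl (3 * 2)%nat.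
    pose proof (bernoulli_m (m0/6) 6 ltac:(lra)). simpl (INR 6) in H.
    unfold sig. lra. }
  set (M' := Rabs M).
  set (c := (/ m0) ^ (Z.abs_nat s)).
  assert (Hc : 0 <= c).
  { unfold c. apply pow_le. apply Rlt_le, Rinv_0_lt_compat; lra. }
  assert (HM' : 0 <= M') by apply Rabs_pos.
  set (A := / (1 - sig)).
  assert (HA : 0 < A) by (apply Rinv_0_lt_compat; lra).
  assert (HNA : forall N, INR N * sig ^ N <= A).
  { intros N. pose proof (Nsig sig N Hsig).
    assert (0 <= sig ^ S N) by (apply pow_le; lra).
    unfold A. apply Rmult_le_reg_r with (1 - sig). lra.
    rewrite Rinv_l by lra. lra. }
  set (B := M' * c * A ^ 2).
  assert (HB : 0 <= B) by (unfold B; apply Rmult_le_pos; [apply Rmult_le_pos|apply pow_le]; lra).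
  set (y := Rmin (/ (A + 1)) (eps / (B + 1))).
  assert (Hy : 0 < y).
  { unfold y. apply Rmin_pos. apply Rinv_0_lt_compat; lra.
    apply Rdiv_lt_0_compat; lra. }
  destruct (pow_lt_1_zero sig ltac:(rewrite Rabs_right; lra) y Hy) as [N1 HN1].
  exists (Nat.max N1 2). intros N HN q Hq.
  assert (HN2 : (2 <= N)%nat) by lia.
  specialize (HN1 N ltac:(lia)). rewrite Rabs_right in HN1 by (apply Rle_ge, pow_le; lra).
  assert (Hsy1 : sig ^ N <= / (A + 1)) by (pose proof (Rmin_l (/ (A + 1)) (eps / (B + 1))); fold y in H; lra).
  assert (Hsy2 : sig ^ N <= eps / (B + 1)) by (pose proof (Rmin_r (/ (A + 1)) (eps / (B + 1))); fold y in H; lra).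
  assert (HsN : 0 <= sig ^ N) by (apply pow_le; lra).
  set (x := INR N * rho ^ N).
  assert (Hxe : x = (INR N * sig ^ N) * (sig ^ N * sig ^ N)).
  { unfold x, rho. rewrite <- pow_mult. replace (3 * N)%nat with (N + N + N)%nat by lia.
    rewrite !pow_add. ring. }
  assert (HsN1 : sig ^ N <= 1) by (rewrite <- (pow1 N); apply pow_incr; lra).
  assert (HNs0 : 0 <= INR N * sig ^ N) by (apply Rmult_le_pos; [apply pos_INR|lra]).
  pose proof (HNA N) as HNAN.
  assert (Hx0 : 0 <= x) by (rewrite Hxe; apply Rmult_le_pos; nra).
  assert (Hx1 : x <= 1).
  { rewrite Hxe. apply Rle_trans with (A * sig ^ N).
    - apply Rmult_le_compat; nra.
    - apply Rmult_le_reg_r with (A + 1). lra.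
      apply Rle_trans with (A * (/ (A + 1) * (A + 1))).
      + rewrite <- Rmult_assoc. apply Rmult_le_compat_r; [lra|]. apply Rmult_le_compat_l; lra.
      + rewrite Rinv_l by lra. lra. }
  assert (HNx : INR N * x <= A ^ 2 * sig ^ N).
  { rewrite Hxe. replace (INR N * (INR N * sig ^ N * (sig ^ N * sig ^ N)))
      with ((INR N * sig ^ N) ^ 2 * sig ^ N) by ring.
    apply Rmult_le_compat_r; auto. apply pow_incr. split; auto. }
  assert (Hq0 : m0 < Rabs q <= 1 - m0) by auto.
  assert (Hqnz : q <> 0) by (intro; subst; rewrite Rabs_R0 in Hq0; lra).
  assert (Hterm : forall a, (1 <= a <= N - 1)%nat ->
     Rabs (Binomial.C N a * b N a q * powerRZ q (Z.of_nat (a * (N - a)) + s)) <= x * M' * c).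
  { intros a Ha.
    rewrite powerRZ_add by auto. rewrite <- pow_powerRZ.
    rewrite !Rabs_mult. rewrite (Rabs_right (Binomial.C N a)) by (apply Rle_ge, C_nonneg).
    rewrite <- RPow_abs.
    assert (Hb : Rabs (b N a q) <= M') by (apply Rle_trans with M; [apply HM; auto|apply Rle_abs]).
    assert (Hp : Rabs (powerRZ q s) <= c) by (apply powerRZ_bound; lra).
    assert (Hk : Binomial.C N a * Rabs q ^ (a * (N - a)) <= x).
    { destruct (Nat.le_gt_cases (2 * a) N) as [Hle|Hgt].
      - apply term_bound with a. all: try lra. all: try lia. all: try (apply C_le_pow; lia). all: try nia. all: exact Hx1.
      - apply term_bound with (N - a)%nat. all: try lra. all: try lia.
        all: try (rewrite pascal_step1 by lia; apply C_le_pow; lia). all: try nia. all: exact Hx1. }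
    assert (0 <= Binomial.C N a * Rabs q ^ (a * (N - a))).
    { apply Rmult_le_pos. apply C_nonneg. apply pow_le, Rabs_pos. }
    pose proof (Rabs_pos (b N a q)). pose proof (Rabs_pos (powerRZ q s)).
    replace (Binomial.C N a * Rabs (b N a q) * (Rabs q ^ (a * (N - a)) * Rabs (powerRZ q s)))
      with ((Binomial.C N a * Rabs q ^ (a * (N - a))) * Rabs (b N a q) * Rabs (powerRZ q s)) by ring.
    apply Rmult_le_compat; try nra. }
  unfold lemma_sum, sum_f.
  eapply Rle_trans. apply sum_f_R0_triangle.
  eapply Rle_trans. apply sum_Rle with (Bn := fun _ => x * M' * c).
  { intros n Hn. apply Hterm. lia. }
  rewrite sum_cte. replace (S (N - 1 - 1)) with (N - 1)%nat by lia.
  rewrite minus_INR by lia. simpl (INR 1).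
  apply Rle_trans with (M' * c * (INR N * x)).
  { pose proof (pos_INR N). assert (0 <= M' * c) by nra. nra. }
  apply Rle_trans with (B * sig ^ N).
  { unfold B. replace (M' * c * A ^ 2 * sig ^ N) with ((M' * c) * (A ^ 2 * sig ^ N)) by ring.
    apply Rmult_le_compat_l. nra. exact HNx. }
  apply Rle_trans with (B * (eps / (B + 1))).
  { apply Rmult_le_compat_l; auto. }
  unfold Rdiv. apply Rmult_le_reg_r with (B + 1). lra.
  replace (B * (eps * / (B + 1)) * (B + 1)) with (B * eps * (/ (B + 1) * (B + 1))) by ring.
  rewrite Rinv_l by lra. nra.
Qed.
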